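(* Let the plant transfer function be proper, with the sum of its poles negative (so $a_{n-1}>0$) and its first nonzero Markov parameter positive (so $b_{n-1}\ge0$). Suppose the smooth feedback system $\dot\zeta=A\zeta-B\tanh(\gamma C\zeta)$ possesses a periodic orbit that has a finite period and a finite number of crossings of the hyperplane $\{Cx=0\}$, all transversal. Then, as the gain $\gamma$ is taken to infinity, the linearized flow around this periodic orbit shrinks volume in phase space.
   Context: The plant is $\frac{b(s)}{a(s)}=\frac{b_{n-1}s^{n-1}+\dots+b_0}{s^n+a_{n-1}s^{n-1}+\dots+a_0}$, with realization: $A$ with $A_{i+1,i}=1$ ($i=1,\dots,n-1$), last column $(-a_0,\dots,-a_{n-1})^T$, other entries zero; $B=(b_0,\dots,b_{n-1})^T$; $C=(0,\dots,0,1)$. The linearized flow around a periodic orbit $p(t;\gamma)$ is $\dot\delta=\bigl[A-\frac{\gamma}{\cosh^2(\gamma Cp(t;\gamma))}BC\bigr]\delta$; volume shrinkage over one period means the determinant of its monodromy matrix $\Phi(T_{\rm period},0)$ is less than one. Transversal crossing at $t_0$ means $C\frac{d}{dt}p(t_0;\gamma)\neq0$. *)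

(* Defs.v *)
From HB Require Import structures.
From mathcomp Require Import all_boot all_order all_algebra.
From mathcomp Require Import all_classical all_reals all_analysis.
Set Implicit Arguments. Unset Strict Implicit. Unset Printing Implicit Defensive.
Import Order.TTheory GRing.Theory Num.Theory.
Import numFieldNormedType.Exports.
Local Open Scope classical_set_scope.
Local Open Scope ring_scope.

Section Lure.
Variable R : realType.

Definition coshR (x : R) : R := (expR x + expR (- x)) / 2.
Definition tanhR (x : R) : R := (expR x - expR (- x)) / (expR x + expR (- x)).

Variable n : nat.
(* plant of order n.+1 (i.e. any order >= 1);
   a i = a_i, b i = b_i for i = 0..n *)
Variables a b : 'I_n.+1 -> R.

(* companion realization: A_{i+1,i} = 1, last column (-a_0,...,-a_n)^T *)
Definition Amat : 'M[R]_n.+1 :=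
  \matrix_(i, j) ((if nat_of_ord i == (nat_of_ord j).+1 then 1 else 0)
                  + (if j == ord_max then - a i else 0)).
Definition Bvec : 'cV[R]_n.+1 := \col_i b i.
Definition Cvec : 'rV[R]_n.+1 := \row_j (if j == ord_max then 1 else 0).

Definition Cout (x : 'cV[R]_n.+1) : R := (Cvec *m x) 0 0.

Definition markov (k : nat) : R := (Cvec *m (Amat ^+ k) *m Bvec) 0 0.
Definition first_nonzero_markov_pos : Prop :=
  exists k, (forall j, (j < k)%N -> markov j = 0) /\ 0 < markov k.

Definition lure_field (gamma : R) (z : 'cV[R]_n.+1) : 'cV[R]_n.+1 :=
  Amat *m z - tanhR (gamma * Cout z) *: Bvec.

Definition periodic_orbit (gamma : R) (p : R -> 'cV[R]_n.+1) (Tp : R) : Prop :=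
  [/\ forall t, derivable p t 1,
      forall t, derive1 p t = lure_field gamma (p t),
      0 < Tp,
      forall t, p (t + Tp) = p t &
      forall s, 0 < s < Tp -> exists t, p (t + s) <> p t].

Definition crossing_times (p : R -> 'cV[R]_n.+1) (Tp : R) : set R :=
  [set t | 0 <= t < Tp /\ Cout (p t) = 0].
Definition finite_transversal_crossings (p : R -> 'cV[R]_n.+1) (Tp : R) : Prop :=
  finite_set (crossing_times p Tp) /\
  forall t, crossing_times p Tp t -> Cout (derive1 p t) <> 0.

Definition linearized (gamma : R) (p : R -> 'cV[R]_n.+1) (t : R) : 'M[R]_n.+1 :=
  Amat - (gamma / (coshR (gamma * Cout (p t)) ^+ 2)) *: (Bvec *m Cvec).

Definition transition_matrix (gamma : R) (p : R -> 'cV[R]_n.+1)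
    (Phi : R -> 'M[R]_n.+1) : Prop :=
  [/\ forall t, derivable Phi t 1,
      forall t, derive1 Phi t = linearized gamma p t *m Phi t &
      Phi 0 = 1%:M].

End Lure.

(* Main.v *)
Require Import Defs.
From HB Require Import structures.
From mathcomp Require Import all_boot all_order all_algebra.
From mathcomp Require Import all_classical all_reals all_analysis.
From mathcomp Require Import fingroup perm ring lra.
Import Order.TTheory GRing.Theory Num.Theory.
Import numFieldNormedType.Exports.
Local Open Scope classical_set_scope.
Local Open Scope ring_scope.

Section Helpers.
Variable R : realType.

Lemma is_derive_sumT (I : finType) (h : I -> R -> R) (dh : I -> R) (t : R) :
  (forall i, is_derive t (1:R) (h i) (dh i)) ->
  is_derive t (1:R) (fun s => \sum_i h i s) (\sum_i dh i).
Proof.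
move=> H; rewrite -fct_sumE.
by elim/big_ind2 : _ => // [|] *; [exact: is_derive_cst|exact: is_deriveD].
Qed.

Lemma is_derive_prod k (f : 'I_k -> R -> R) (df : 'I_k -> R) (t : R) :
  (forall i, is_derive t (1:R) (f i) (df i)) ->
  is_derive t (1:R) (fun s => \prod_i f i s)
    (\sum_i \prod_j (if j == i then df j else f j t)).
Proof.
elim: k f df => [|k IH] f df H.
  rewrite big_ord0.
  have -> : (fun s => \prod_(i < 0) f i s) = cst 1 by apply/funext => s; rewrite big_ord0.
  exact: is_derive_cst.
have -> : (fun s => \prod_(i < k.+1) f i s) =
   (fun s => \prod_(i < k) f (widen_ord (leqnSn k) i) s) * (fun s => f ord_max s).
  by apply/funext => s; rewrite big_ord_recr.
apply: (is_derive_eq (is_deriveM (IH _ (fun i => df (widen_ord (leqnSn k) i)) (fun i => H _)) (H ord_max))).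
rewrite big_ord_recr /= big_ord_recr /= eqxx.
have -> : \prod_(i < k) (if widen_ord (leqnSn k) i == ord_max
      then df (widen_ord (leqnSn k) i) else f (widen_ord (leqnSn k) i) t) =
      \prod_(i < k) f (widen_ord (leqnSn k) i) t.
  apply: eq_bigr => i _; rewrite ifF //; apply/negbTE.
  by rewrite -val_eqE /= neq_ltn ltn_ord.
rewrite [in RHS]addrC; congr (_ + _).
rewrite -[f ord_max t *: _]/(f ord_max t * _) big_distrr /=; apply: eq_bigr => i _.
rewrite big_ord_recr /= ifF; last first.
  by apply/negbTE; rewrite -val_eqE /= neq_ltn ltn_ord orbT.
rewrite mulrC; congr (_ * _); by apply: eq_bigr => j _; rewrite (inj_eq (@widen_ord_inj _ _ _)).
Qed.


Lemma det_rowrep k (M : 'M[R]_k) i (v : 'I_k -> 'I_k -> R) :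
  \det (\matrix_(j, l) (if j == i then v j l else M j l)) =
  \sum_(s : 'S_k) (-1) ^+ s * (v i (s i) * \prod_(j | j != i) M j (s j)).
Proof.
apply: eq_bigr => s _; congr (_ * _).
rewrite (bigD1 i) //= !mxE eqxx; congr (_ * _).
by apply: eq_bigr => j /negPf ji; rewrite mxE ji.
Qed.

Lemma det_rowrepL k (L M : 'M[R]_k) i :
  \det (\matrix_(j, l) (if j == i then (L *m M) j l else M j l)) = L i i * \det M.
Proof.
rewrite det_rowrep.
have E : forall m, \det (\matrix_(j, l) (if j == i then M m l else M j l)) =
   \sum_(s : 'S_k) (-1) ^+ s * (M m (s i) * \prod_(j | j != i) M j (s j)).
  by move=> m; exact: (@det_rowrep k M i (fun _ l => M m l)).
have -> : \sum_(s : 'S_k) (-1) ^+ s * ((L *m M) i (s i) * \prod_(j | j != i) M j (s j))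
   = \sum_m L i m * \det (\matrix_(j, l) (if j == i then M m l else M j l)).
  under [RHS]eq_bigr => m _ do rewrite E big_distrr /=.
  rewrite exchange_big /=; apply: eq_bigr => s _.
  rewrite mxE big_distrl big_distrr /=; apply: eq_bigr => m _.
  by rewrite -!mulrA mulrCA.
rewrite (bigD1 i) //= big1 ?addr0.
  congr (_ * _); congr (\det _); apply/matrixP => j l; rewrite mxE.
  by case: eqP => // ->.
move=> m mi; rewrite (determinant_alternate (i1:=i) (i2:=m)) ?mulr0 //.
  by rewrite eq_sym.
move=> l; rewrite !mxE eqxx; by case: (_ == _).
Qed.

Lemma is_derive_det k (M : R -> 'M[R]_k) (L : 'M[R]_k) t :
  derivable M t 1 -> derive1 M t = L *m M t ->
  is_derive t (1:R) (fun s => \det (M s)) (\tr L * \det (M t)).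
Proof.
move=> dM HM.
have dMe i j : is_derive t (1:R) (fun s => M s i j) ((L *m M t) i j).
  have /derivable_mxP/(_ i j) dij := dM.
  apply: (is_derive_eq (derivableP dij)).
  by rewrite -HM derive1E derive_mx // mxE.
rewrite /determinant.
apply: (is_derive_eq (@is_derive_sumT _ (fun (s : {perm _}) x => (-1) ^+ s * \prod_i M x i (s i)) _ t _)).
  move=> s.
  have -> : (fun x => (-1) ^+ s * \prod_i M x i (s i)) =
     cst ((-1) ^+ s) * (fun x => \prod_i M x i (s i)) by apply/funext.
  have := (is_deriveM (is_derive_cst _ _ _) (@is_derive_prod _ (fun i x => M x i (s i)) _ t (fun i => dMe i (s i)))) => HH.
  exact: HH.
rewrite /=.
under eq_bigr => s _ do rewrite scaler0 addr0 /cst -[_ *: _]/(_ * _) big_distrr.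
rewrite exchange_big /=.
have -> : \sum_(s : {perm 'I_k}) (-1) ^+ s * \prod_i M t i (s i) = \det (M t) by [].
rewrite /mxtrace big_distrl /=; apply: eq_bigr => i _.
rewrite -det_rowrepL /determinant; apply: eq_bigr => s _.
f_equal. under [RHS]eq_bigr => j _ do rewrite mxE. reflexivity.
Qed.


Lemma is_derive_expRM (c t : R) :
  is_derive t (1:R) (fun s => expR (c * s)) (c * expR (c * t)).
Proof.
have hl : is_derive t (1:R) (fun s : R => c * s) c.
  have -> : (fun s : R => c * s) = cst c * id by apply/funext.
  apply: (is_derive_eq (is_deriveM (is_derive_cst _ _ _) (is_derive_id _ _))).
  by rewrite /= scaler0 addr0 /cst -[_ *: _]/(_ * _) mulr1.
have := is_derive1_comp (f:=expR) (is_derive_expR (c * t)) hl.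
by rewrite mulrC.
Qed.



Lemma key n (a b : 'I_n.+1 -> R) (gamma : R) (p : R -> 'cV[R]_n.+1) (Tp : R)
  (Phi : R -> 'M[R]_n.+1) :
  0 < a ord_max -> 0 <= b ord_max -> 0 < gamma -> 0 < Tp ->
  transition_matrix a b gamma p Phi -> \det (Phi Tp) < 1.
Proof.
move=> a0 b0 g0 T0 [dPhi ePhi Phi0].
set al := a ord_max.
pose K t := gamma / coshR (gamma * Cout (p t)) ^+ 2.
have K0 t : 0 <= K t by rewrite /K divr_ge0 ?sqr_ge0 // ltW.
have nS (m : nat) : (m == m.+1) = false by rewrite eqn_leq ltnn andbF.
have trL t : \tr (linearized a b gamma p t) = - al - K t * b ord_max.
  rewrite /linearized raddfB /= mxtraceZ; congr (_ - _ * _).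
    rewrite /mxtrace (bigD1 ord_max) //= big1 ?addr0 => [|i /negPf ne];
      rewrite !mxE nS ?eqxx ?ne ?add0r //.
  rewrite /mxtrace (bigD1 ord_max) //= big1 ?addr0 => [|i /negPf ne];
    rewrite !mxE big_ord1 !mxE ?eqxx ?ne ?mulr1 ?mulr0 //.
pose d s := \det (Phi s). pose w s := expR (al * s).
pose g s := (d s * w s) ^+ 2.
have dg t : is_derive t (1:R) g (- (2 * (d t * w t) ^+ 2 * (K t * b ord_max))).
  have hd := @is_derive_det _ Phi _ t (dPhi t) (ePhi t).
  have hw := is_derive_expRM al t.
  have H := is_deriveX 2 (is_deriveM hd hw).
  have -> : g = ((fun s => \det (Phi s)) * (fun s => expR (al * s))) ^+ 2.
    by apply/funext => s; rewrite /g /d /w /= !expr2.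
  apply: (is_derive_eq H).
  rewrite /= trL /d /w.
  change (((fun s : R => \det (Phi s)) * (fun s : R => expR (al * s))) t) with (\det (Phi t) * expR (al * t)).
  move: (\det (Phi t)) (expR (al * t)) (K t * b ord_max) => x y z.
  rewrite -[_ *: (_ + _)]/(_ * _) -[x *: _]/(x * _) -[y *: _]/(y * _).
  ring.
have mono : g Tp <= g 0.
  apply: (@ler0_derive1_nincr R g 0 Tp _ _ _ 0 Tp (lexx _) (ltW T0) (lexx _)).
  - by move=> x _; case: (dg x).
  - move=> x _; rewrite derive1E (@derive_val _ _ _ _ _ _ _ (dg x)) oppr_le0.
    by apply: mulr_ge0; [apply: mulr_ge0; [|exact: sqr_ge0] | apply: mulr_ge0].
  - apply: continuous_subspaceT => x.
    by apply/differentiable_continuous/derivable1_diffP; case: (dg x).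
have g0' : g 0 = 1 by rewrite /g /d /w Phi0 det1 mulr0 expR0 mulr1 expr1n.
have w1 : 1 < w Tp by rewrite /w expR_gt1 mulr_gt0.
rewrite ltNge; apply/negP => d1.
move: mono; rewrite g0' /g -/(d Tp) => mono.
have d1' : 1 <= d Tp := d1.
move: mono d1' w1; move: (d Tp) (w Tp) => x y m x1 y1.
have h1 : 0 <= (x - 1) * (y - 1) by apply: mulr_ge0; lra.
have h2 : 1 < x * y by nra.
have h3 : 0 < (x * y - 1) * (x * y + 1) by apply: mulr_gt0; lra.
nra.
Qed.

End Helpers.

Theorem mainTheorem17 (R : realType) (n : nat) (a b : 'I_n.+1 -> R)
    (p : R -> R -> 'cV[R]_n.+1) (Tp : R -> R) :
  0 < a ord_max ->
  first_nonzero_markov_pos a b ->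
  (\forall gamma \near +oo,
      periodic_orbit a b gamma (p gamma) (Tp gamma) /\
      finite_transversal_crossings (p gamma) (Tp gamma)) ->
  \forall gamma \near +oo,
    forall Phi : R -> 'M[R]_n.+1,
      transition_matrix a b gamma (p gamma) Phi -> \det (Phi (Tp gamma)) < 1.
Proof.
move=> a0 hm hnear.
have b0 : 0 <= b ord_max.
  case: hm => k [hk mk].
  have m0 : Defs.markov a b 0 = b ord_max.
    rewrite /Defs.markov expr0 mulmx1 mxE (bigD1 ord_max) //= big1 ?addr0.
      by rewrite !mxE eqxx mul1r.
    by move=> j /negPf nj; rewrite !mxE nj mul0r.
  case: k hk mk => [|k] hk mk; first by rewrite -m0 ltW.
  by rewrite -m0 hk.
near=> gamma.
have [[_ _ T0 _ _] _] : periodic_orbit a b gamma (p gamma) (Tp gamma) /\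
   finite_transversal_crossings (p gamma) (Tp gamma) by near: gamma.
have g0 : 0 < gamma by near: gamma; apply: nbhs_pinfty_gt; rewrite num_real.
move=> Phi HPhi.
exact: (@key R n a b gamma (p gamma) (Tp gamma) Phi a0 b0 g0 T0 HPhi).
Unshelve. all: by end_near.
Qed.
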